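(* Let $\delta,\tau$ be positive integers with $\gcd(\delta,\tau)=1$, let $\ell\ge 1$ be an integer and let $t=\ell\tau$. Then \[ g\Big(1+\frac{\delta}{\tau},t\Big)\le \frac{\ell\delta^2+\tau+2\delta t}{2\ell\delta^2+\delta+\tau+2\delta t}. \]
   Context: Let $\mathbb{F}$ be a finite field and $x_1,\dots,x_p$ a basis of $\mathbb{F}^p$. A $[t\times m,p]$ array code is a $t\times m$ array whose entries (cells) are linear combinations of $x_1,\dots,x_p$; its columns are called servers. It has the $k$-PIR property (is a $[t\times m,p]$ $k$-PIR array code) if for every $i\in\{1,\dots,p\}$ there exist $k$ pairwise disjoint sets $S_1,\dots,S_k$ of columns such that for every $j$ the vector $x_i$ lies in the linear span of all entries of the columns in $S_j$. Its PIR rate is $k/m$. For a rational $s>1$ and a positive integer $t$ with $st$ an integer, $g(s,t)$ is the largest PIR rate $k/m$ of a $[t\times m,st]$ $k$-PIR array code (over all finite fields, all $m$ and all $k$). *)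

(* Defs.v *)
From HB Require Import structures.
From mathcomp Require Import all_boot all_order all_algebra.
Set Implicit Arguments. Unset Strict Implicit. Unset Printing Implicit Defensive.
Import Order.TTheory GRing.Theory Num.Theory.
Local Open Scope ring_scope.

(* A [t x m, p] array code over F: cell (r, j) (row r, column/server j) is a
   linear combination of the basis x_1..x_p of F^p, represented by its
   coefficient row vector in 'rV[F]_p.  The basis vector x_i is delta_mx 0 i. *)
Definition array_code (F : fieldType) (t m p : nat) := 'I_t -> 'I_m -> 'rV[F]_p.

Definition cols_span (F : fieldType) (t m p : nat) (C : array_code F t m p)
  (S : {set 'I_m}) : 'M[F]_p :=
  (\sum_(j in S) \sum_(r < t) <<C r j>>)%MS.

Definition is_kPIR (F : fieldType) (t m p : nat) (C : array_code F t m p)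
  (k : nat) : Prop :=
  forall i : 'I_p, exists S : 'I_k -> {set 'I_m},
    (forall a b : 'I_k, a != b -> [disjoint S a & S b]) /\
    (forall a : 'I_k, ((delta_mx (0 : 'I_1) i : 'rV[F]_p) <= cols_span C (S a))%MS).

(* r is the PIR rate k/m of some [t x m, s t] k-PIR array code over some
   finite field (for m = 0, k/m is 0 in rat by convention; such codes only
   exist with k = 0 unless p = 0). *)
Definition PIR_rate_achievable (s : rat) (t : nat) (r : rat) : Prop :=
  exists (F : finFieldType) (m k p : nat) (C : array_code F t m p),
    p%:Q = s * t%:Q /\ is_kPIR C k /\ r = k%:Q / m%:Q.

(* Main.v *)
Require Import Defs.
From HB Require Import structures.
From mathcomp Require Import all_boot all_order all_algebra.
From mathcomp Require Import zify.
From mathcomp.algebra_tactics Require Import ring.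
Set Implicit Arguments. Unset Strict Implicit. Unset Printing Implicit Defensive.
Import Order.TTheory GRing.Theory Num.Theory.
Local Open Scope ring_scope.

Section Mx.
Variable F : fieldType.
Variable p : nat.

Definition xv (i : 'I_p) : 'rV[F]_p := delta_mx 0 i.
Definition Hk (i : 'I_p) : 'M[F]_p := kermx (delta_mx i (0 : 'I_1) : 'M[F]_(p, 1)).

Lemma xv_notH i : ~~ (xv i <= Hk i)%MS.
Proof.
rewrite sub_kermx /xv mul_delta_mx; apply/negP => /eqP /matrixP /(_ 0 0).
rewrite !mxE /=; by move/eqP; rewrite oner_eq0.
Qed.

Lemma xv_H i i' : i' != i -> (xv i' <= Hk i)%MS.
Proof. by move=> h; rewrite sub_kermx /xv mul_delta_mx_0. Qed.

Lemma rank_sum_rows n (f : 'I_n -> 'rV[F]_p) :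
  (\rank (\sum_(r < n) <<f r>>)%MS <= n)%N.
Proof.
elim: n f => [|n IH] f; first by rewrite big_ord0 mxrank0.
rewrite big_ord_recr /=.
apply: leq_trans (mxrank_adds_leqif _ _) _.
have h2 : (\rank <<f ord_max>> <= 1)%N by rewrite genmxE rank_leq_row.
by have := leq_add (IH (fun i => f (widen_ord (leqnSn n) i))) h2; rewrite addn1.
Qed.

Lemma basis_rank (N : {set 'I_p}) (A : 'M[F]_p) :
  (forall i, i \in N -> (xv i <= A)%MS) ->
  (#|N| <= \rank A)%N /\ ((\rank A <= #|N|)%N -> forall i, i \notin N -> (A <= Hk i)%MS).
Proof.
move=> hN.
pose M : 'M[F]_(#|N|, p) := \matrix_(a < #|N|) xv (enum_val a).
pose P : 'M[F]_(p, #|N|) := \matrix_(k, b) (k == enum_val b)%:R.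
have MP : M *m P = 1%:M.
  apply/matrixP => a b.
  have E : row a (M *m P) = row (enum_val a) P by rewrite row_mul rowK /xv -rowE.
  move/matrixP: E => /(_ 0 b); rewrite !mxE => ->.
  by rewrite (inj_eq enum_val_inj).
have MA : (M <= A)%MS by apply/row_subP => a; rewrite rowK; apply/hN/enum_valP.
have rM : (#|N| <= \rank M)%N.
  by rewrite -{1}(mxrank1 F #|N|) -MP mxrankM_maxl.
split; first exact: leq_trans rM (mxrankS MA).
move=> hr i hi.
have AM : (A <= M)%MS.
  have := mxrank_leqif_sup MA => /leqifP.
  case: ifP => // _ h; have := leq_trans h hr; by rewrite ltnNge rM.
apply: submx_trans AM _; apply/row_subP => a; rewrite rowK; apply: xv_H.
by apply: contraNneq hi => <-; apply: enum_valP.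
Qed.

End Mx.

Lemma card_sum (T : finType) (X : {set T}) : #|X| = (\sum_x (x \in X : nat))%N.
Proof. by rewrite -sum1_card big_mkcond; apply: eq_bigr => x _; case: (x \in X). Qed.

Lemma disj_sum (T : finType) k (S : 'I_k -> {set T}) (A : {set T}) :
  (forall a b, a != b -> [disjoint S a & S b]) ->
  (\sum_a #|S a :&: A| <= #|A|)%N.
Proof.
move=> hd.
have e : forall a, #|S a :&: A| = (\sum_(j in A) (j \in S a : nat))%N.
  move=> a; rewrite -sum1_card big_mkcond [RHS]big_mkcond; apply: eq_bigr => j _.
  by rewrite inE; case: (j \in A); case: (j \in S a).
rewrite (eq_bigr _ (fun a _ => e a)) exchange_big /= -sum1_card; apply: leq_sum => j _.
case: (pickP (fun a => j \in S a)) => [a0 ha0|none]; last by rewrite big1 // => a _; rewrite none.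
rewrite (bigD1 a0) //= ha0 big1 // => b hb.
by rewrite (disjointFr (hd a0 b _) ha0) // eq_sym.
Qed.

Lemma dcount (I J : finType) (P : I -> J -> bool) :
  (\sum_i #|[set j | P i j]| = \sum_j #|[set i | P i j]|)%N.
Proof.
rewrite (eq_bigr _ (fun i _ => card_sum [set j | P i j])).
rewrite [RHS](eq_bigr _ (fun j _ => card_sum [set i | P i j])) exchange_big.
by apply: eq_bigr => j _; apply: eq_bigr => i _; rewrite !inE.
Qed.

Section Code.
Variables (F : fieldType) (t m p : nat) (C : array_code F t m p).

Definition V (j : 'I_m) : 'M[F]_p := (\sum_(r < t) <<C r j>>)%MS.
Definition Aset (i : 'I_p) := [set j | (xv F i <= V j)%MS].
Definition Bset (i : 'I_p) := [set j | ~~ (xv F i <= V j)%MS && ~~ (V j <= Hk F i)%MS].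
Definition Nset (j : 'I_m) := [set i | (xv F i <= V j)%MS].
Definition Iset (j : 'I_m) := [set i | ~~ (xv F i <= V j)%MS && ~~ (V j <= Hk F i)%MS].

Lemma server_bound e j : p = (t + e)%N ->
  ((e + 1) * #|Nset j| + #|Iset j| <= (e + 1) * t)%N.
Proof.
move=> hp.
have hN : forall i, i \in Nset j -> (xv F i <= V j)%MS by move=> i; rewrite inE.
have [h1 h2] := basis_rank hN.
have rV : (\rank (V j) <= t)%N by apply: rank_sum_rows.
have h3 : (#|Nset j| + #|Iset j| <= p)%N.
  rewrite -cardsUI.
  have -> : Nset j :&: Iset j = set0.
    by apply/setP => i; rewrite !inE; case: (xv F i <= V j)%MS.
  by rewrite cards0 addn0 -[X in (_ <= X)%N]card_ord max_card.
have [ht|ht] := ltnP #|Nset j| t.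
  by nia.
have -> : Iset j = set0.
  apply/setP => i; rewrite !inE; apply/negbTE; apply/negP => /andP[hi hv].
  by move: hv; rewrite (h2 (leq_trans rV ht)) // inE.
rewrite cards0 addn0; have : (#|Nset j| <= t)%N by apply: leq_trans h1 rV.
by nia.
Qed.

Lemma cs_V (S : {set 'I_m}) : cols_span C S = (\sum_(j in S) V j)%MS.
Proof. by []. Qed.

Lemma file_bound e i k (S : 'I_k -> {set 'I_m}) :
  (forall a b, a != b -> [disjoint S a & S b]) ->
  (forall a, (xv F i <= cols_span C (S a))%MS) ->
  ((2 * e + 1) * k <= (e + 1) * #|Aset i| + e * m + #|Bset i|)%N.
Proof.
move=> hd hr.
pose K1 := [set a | S a :&: Aset i != set0].
have ne : forall a, S a != set0.
  move=> a; apply/negP => /eqP ha; have := hr a; rewrite cs_V ha big_set0.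
  move=> h; have := xv_notH F i; by rewrite (submx_trans h (sub0mx _ _)).
have c1 : (#|K1| <= #|Aset i|)%N.
  rewrite card_sum; apply: leq_trans (disj_sum _ hd); apply: leq_sum => a _.
  by rewrite inE -card_gt0; case: #|_|.
have nK : forall a, a \notin K1 -> (S a :&: Bset i != set0) /\ (2 <= #|S a|)%N.
  move=> a; rewrite inE negbK => /eqP hA; split.
    apply/negP => /eqP hB; have := xv_notH F i; rewrite (submx_trans (hr a)) //.
    rewrite cs_V; apply/sumsmx_subP => j hj.
    have jA : j \notin Aset i.
      apply/negP => jA; have : j \in S a :&: Aset i by rewrite inE hj.
      by rewrite hA inE.
    have jB : j \notin Bset i.
      apply/negP => jB; have : j \in S a :&: Bset i by rewrite inE hj.
      by rewrite hB inE.
    move: jA jB; rewrite !inE => /negbTE -> /=; by rewrite negbK.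
  rewrite ltnNge; apply/negP => h1.
  have : #|S a| == 1%N by rewrite eqn_leq h1 card_gt0 ne.
  move/cards1P => [x hx].
  have := hr a; rewrite cs_V hx big_set1 => hxA.
  have : x \in S a :&: Aset i by rewrite inE hx set11 inE hxA.
  by rewrite hA inE.
have c2 : (#|~: K1| <= #|Bset i|)%N.
  rewrite card_sum; apply: leq_trans (disj_sum _ hd); apply: leq_sum => a _.
  rewrite inE; case: (boolP (a \in K1)) => //= /nK [+ _].
  by rewrite -card_gt0.
have c3 : (#|K1| + 2 * #|~: K1| <= m)%N.
  have : (\sum_a (1 + (a \in ~: K1)) <= m)%N.
    apply: leq_trans (_ : \sum_a #|S a :&: setT| <= _)%N; last first.
      by apply: leq_trans (disj_sum _ hd) _; rewrite cardsT card_ord.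
    apply: leq_sum => a _; rewrite setIT inE.
    case: (boolP (a \in K1)) => /= h; last by have [_ ->] := nK a h.
    by rewrite card_gt0 ne.
  rewrite big_split /= -card_sum sum1_card card_ord.
  have := cardsC K1; rewrite card_ord.
  move: #|K1| #|~: K1| => x y; lia.
have := cardsC K1; rewrite card_ord => hk.
move: c1 c2 c3 hk; move: #|K1| #|~: K1| #|Aset i| #|Bset i| => x y z w; nia.
Qed.

Lemma count_bound e k : p = (t + e)%N -> is_kPIR C k ->
  (p * (2 * e + 1) * k <= m * ((e + 1) * t + p * e))%N.
Proof.
move=> hp hk.
have hf : forall i, ((2 * e + 1) * k <= (e + 1) * #|Aset i| + e * m + #|Bset i|)%N.
  by move=> i; have [S [hd hr]] := hk i; exact: file_bound hd hr.
have ex1 : (\sum_i #|Aset i| = \sum_j #|Nset j|)%N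
  by exact: (dcount (fun i j => (xv F i <= V j)%MS)).
have ex2 : (\sum_i #|Bset i| = \sum_j #|Iset j|)%N
  by exact: (dcount (fun i j => ~~ (xv F i <= V j)%MS && ~~ (V j <= Hk F i)%MS)).
have : (\sum_(i < p) ((2 * e + 1) * k) <= \sum_(i < p) ((e + 1) * #|Aset i| + e * m + #|Bset i|))%N
  by apply: leq_sum => i _; exact: hf.
rewrite big_split big_split /= -!big_distrr /= ex1 ex2 !sum_nat_const !card_ord.
have hs : (\sum_(j < m) ((e + 1) * #|Nset j| + #|Iset j|) <= \sum_(j < m) ((e + 1) * t))%N
  by apply: leq_sum => j _; exact: server_bound.
rewrite big_split -big_distrr sum_nat_const card_ord /= in hs.
move: hs; move: (\sum_j #|Nset j|)%N (\sum_j #|Iset j|)%N => x y; nia.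
Qed.

End Code.

Theorem corollary1 (delta tau l : nat) :
  (0 < delta)%N -> (0 < tau)%N -> coprime delta tau -> (1 <= l)%N ->
  forall r : rat,
    PIR_rate_achievable (1 + delta%:Q / tau%:Q) (l * tau) r ->
    r <= ((l * delta ^ 2 + tau + 2 * delta * (l * tau))%N%:Q /
          (2 * l * delta ^ 2 + delta + tau + 2 * delta * (l * tau))%N%:Q).
Proof.
move=> d0 t0 _ l1 r [F [m [k [p [C [hp [hk ->]]]]]]].
have hp' : p = (l * tau + l * delta)%N.
  rewrite -!pmulrn in hp.
  apply/eqP; rewrite -(eqr_nat rat) hp natrD !natrM; apply/eqP.
  have tz : (tau%:Q != 0) by rewrite pnatr_eq0 -lt0n.
  by field.
have hb := @count_bound F (l * tau) m p C (l * delta) k hp' hk.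
have [->|m0] := posnP m; first by rewrite invr0 mulr0 divr_ge0 // ler0n.
have D0 : (0 < 2 * l * delta ^ 2 + delta + tau + 2 * delta * (l * tau))%N by lia.
rewrite ler_pdivrMr ?ltr0n // mulrAC ler_pdivlMr ?ltr0n // -!natrM ler_nat.
rewrite -(leq_pmul2l (_ : 0 < l)%N) //.
rewrite hp' in hb; nia.
Qed.
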